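(* Let $\mathcal{P}$ be a partition of $\{1,\dots,n\}$. A subspace $\mathcal{U}$ of $\mathbb{R}^n$ is not $\mathcal{P}$-realizable if and only if there is a symmetric $\mathcal{P}$-block-diagonal matrix $B$ with $\operatorname{tr}(B)>0$ and $v^TBv\le 0$ for all $v\in\mathcal{U}^\perp$.
   Context: A matrix is $\mathcal{P}$-block-diagonal if it is zero outside the principal submatrices indexed by blocks $\mathcal{I}\in\mathcal{P}$. $\mathcal{E}_{\mathcal{P}}=\{Y\succeq 0: Y_{\mathcal{I}}=I\text{ for all }\mathcal{I}\in\mathcal{P}\}$, with $Y_{\mathcal{I}}$ the principal submatrix indexed by $\mathcal{I}$. $\mathcal{U}$ is $\mathcal{P}$-realizable if some $Y\in\mathcal{E}_{\mathcal{P}}$ has nullspace containing $\mathcal{U}$. *)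

(* Defs.v *)
From HB Require Import structures.
From mathcomp Require Import all_boot all_order all_algebra.
From mathcomp Require Import reals.
Set Implicit Arguments. Unset Strict Implicit. Unset Printing Implicit Defensive.
Import Order.TTheory GRing.Theory Num.Theory.
Local Open Scope ring_scope.

Definition psd (R : realType) (n : nat) (Y : 'M[R]_n) : Prop :=
  Y^T = Y /\ forall v : 'rV[R]_n, 0 <= (v *m Y *m v^T) ord0 ord0.

Definition in_EP (R : realType) (n : nat) (P : {set {set 'I_n}}) (Y : 'M[R]_n) : Prop :=
  psd Y /\ forall I, I \in P -> forall i j, i \in I -> j \in I -> Y i j = (i == j)%:R.

(* The subspace U is the row space of the matrix U (rows span U).
   U is P-realizable: some Y in E_P has nullspace containing U, i.e. Y u = 0 for all u in U. *)
Definition realizable (R : realType) (n m : nat) (P : {set {set 'I_n}}) (U : 'M[R]_(m, n)) : Prop :=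
  exists Y : 'M[R]_n, in_EP P Y /\ Y *m U^T = 0.

Definition block_diag (R : realType) (n : nat) (P : {set {set 'I_n}}) (B : 'M[R]_n) : Prop :=
  forall i j, ~~ [exists I in P, (i \in I) && (j \in I)] -> B i j = 0.

Definition in_perp (R : realType) (n m : nat) (U : 'M[R]_(m, n)) (v : 'rV[R]_n) : Prop :=
  U *m v^T = 0.

(* Main.v *)
Require Import Defs.
From HB Require Import structures.
From mathcomp Require Import all_boot all_order all_algebra.
From mathcomp Require Import reals.
From mathcomp Require Import ring lra.
From mathcomp Require all_classical all_reals all_analysis.
Set Implicit Arguments. Unset Strict Implicit. Unset Printing Implicit Defensive.
Import Order.TTheory GRing.Theory Num.Theory.
Local Open Scope ring_scope.

Definition bil (R : realType) n (Y : 'M[R]_n) (v w : 'rV[R]_n) : R :=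
  (v *m Y *m w^T) ord0 ord0.
Definition fro (R : realType) n (A C : 'M[R]_n) : R :=
  \sum_(k : 'I_n * 'I_n) A k.1 k.2 * C k.1 k.2.

Lemma bilDl (R : realType) n (Y : 'M[R]_n) v1 v2 w :
  bil Y (v1 + v2) w = bil Y v1 w + bil Y v2 w.
Proof. by rewrite /bil !mulmxDl mxE. Qed.
Lemma bilZl (R : realType) n (Y : 'M[R]_n) (t : R) v w :
  bil Y (t *: v) w = t * bil Y v w.
Proof. by rewrite /bil -!scalemxAl mxE. Qed.
Lemma bilDr (R : realType) n (Y : 'M[R]_n) v w1 w2 :
  bil Y v (w1 + w2) = bil Y v w1 + bil Y v w2.
Proof. by rewrite /bil linearD /= mulmxDr mxE. Qed.
Lemma bilZr (R : realType) n (Y : 'M[R]_n) (t : R) v w :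
  bil Y v (t *: w) = t * bil Y v w.
Proof. by rewrite /bil linearZ /= -scalemxAr mxE. Qed.
Lemma bil_sym (R : realType) n (Y : 'M[R]_n) v w :
  Y^T = Y -> bil Y v w = bil Y w v.
Proof.
move=> sY; rewrite /bil -[in LHS](trmxK (v *m Y *m w^T)) mxE.
by rewrite !trmx_mul trmxK sY mulmxA.
Qed.
Lemma bil_delta (R : realType) n (Y : 'M[R]_n) i j :
  bil Y (delta_mx 0 i) (delta_mx 0 j) = Y i j.
Proof. by rewrite /bil -rowE trmx_delta -colE !mxE. Qed.
Lemma bil_rank1 (R : realType) n (r : 'rV[R]_n) v w :
  bil (r^T *m r) v w = (v *m r^T) 0 0 * (r *m w^T) 0 0.
Proof. by rewrite /bil mulmxA -(mulmxA (v *m r^T)) mxE big_ord1. Qed.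

Lemma froDl (R : realType) n (A B C : 'M[R]_n) : fro (A + B) C = fro A C + fro B C.
Proof. by rewrite /fro -big_split; apply: eq_bigr => k _; rewrite mxE mulrDl. Qed.
Lemma froZl (R : realType) n (t : R) (A C : 'M[R]_n) : fro (t *: A) C = t * fro A C.
Proof. by rewrite /fro mulr_sumr; apply: eq_bigr => k _; rewrite mxE mulrA. Qed.
Lemma froC (R : realType) n (A C : 'M[R]_n) : fro A C = fro C A.
Proof. by apply: eq_bigr => k _; rewrite mulrC. Qed.
Lemma froDr (R : realType) n (A B C : 'M[R]_n) : fro C (A + B) = fro C A + fro C B.
Proof. by rewrite froC froDl !(froC C). Qed.
Lemma froZr (R : realType) n (t : R) (A C : 'M[R]_n) : fro C (t *: A) = t * fro C A.
Proof. by rewrite froC froZl froC. Qed.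
Lemma fro1 (R : realType) n (B : 'M[R]_n) : fro B 1%:M = \tr B.
Proof.
rewrite /fro /mxtrace -(pair_big xpredT xpredT (fun i j => B i j * 1%:M i j)) /=.
apply: eq_bigr => i _; rewrite (bigD1 i) //= mxE eqxx mulr1 big1 ?addr0 // => j /negbTE ji.
by rewrite mxE eq_sym ji mulr0.
Qed.
Lemma fro_bil (R : realType) n (B : 'M[R]_n) v : bil B v v = fro B (v^T *m v).
Proof.
rewrite /fro /bil -(pair_big xpredT xpredT (fun i j => B i j * (v^T *m v) i j)) /=.
rewrite mxE exchange_big /=; apply: eq_bigr => i _.
rewrite mxE mulr_suml; apply: eq_bigr => j _.
by rewrite !mxE big_ord1 !mxE; ring.
Qed.
Lemma fro_ge0 (R : realType) n (B : 'M[R]_n) : 0 <= fro B B.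
Proof. by apply: sumr_ge0 => k _; rewrite -expr2 sqr_ge0. Qed.


Lemma quad_expand (R : realType) n (Y : 'M[R]_n) v w (t : R) : Y^T = Y ->
  bil Y (v + t *: w) (v + t *: w) = bil Y v v + 2 * t * bil Y v w + t ^+ 2 * bil Y w w.
Proof.
move=> sY; rewrite bilDl !bilDr !bilZl !bilZr (bil_sym w v sY); ring.
Qed.

Lemma psd_quad (R : realType) n (Y : 'M[R]_n) v : psd Y -> 0 <= bil Y v v.
Proof. by case=> _ /(_ v). Qed.

Lemma psd_diag_ge0 (R : realType) n (Y : 'M[R]_n) i : psd Y -> 0 <= Y i i.
Proof. by move=> /(psd_quad (delta_mx 0 i)); rewrite bil_delta. Qed.

Lemma psd_cs (R : realType) n (Y : 'M[R]_n) v i : psd Y -> Y i i != 0 ->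
  (bil Y v (delta_mx 0 i)) ^+ 2 / Y i i <= bil Y v v.
Proof.
move=> pY d0; set b := bil Y v _; set d := Y i i.
have := psd_quad (v + (- b / d) *: delta_mx 0 i) pY.
rewrite quad_expand; last by case: pY.
rewrite bil_delta -/d -/b.
have -> : bil Y v v + 2 * (- b / d) * b + (- b / d) ^+ 2 * d = bil Y v v - b ^+ 2 / d.
  by field.
by rewrite subr_ge0.
Qed.

Lemma psd_diag0 (R : realType) n (Y : 'M[R]_n) i j : psd Y -> Y i i = 0 -> Y i j = 0.
Proof.
move=> pY d0; apply/eqP/negPn/negP => nz.
have sY : Y^T = Y by case: pY.
have Yji : Y j i = Y i j by rewrite -{1}sY mxE.
have := psd_quad (delta_mx 0 j + (- (Y j j + 1) / (2 * Y i j)) *: delta_mx 0 i) pY.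
rewrite quad_expand // !bil_delta d0 Yji.
have -> : Y j j + 2 * (- (Y j j + 1) / (2 * Y i j)) * Y i j +
   (- (Y j j + 1) / (2 * Y i j)) ^+ 2 * 0 = -1 by field.
lra.
Qed.

Lemma psd_rank1 (R : realType) n (r : 'rV[R]_n) : psd (r^T *m r).
Proof.
split; first by rewrite trmx_mul trmxK.
move=> v; rewrite -/(bil _ v v) bil_rank1.
have -> : (r *m v^T) 0 0 = (v *m r^T) 0 0.
  by rewrite -[in LHS](trmxK (r *m v^T)) mxE trmx_mul trmxK.
by rewrite -expr2 sqr_ge0.
Qed.


Lemma bilMD (R : realType) n (A C : 'M[R]_n) v w : bil (A + C) v w = bil A v w + bil C v w.
Proof. by rewrite /bil mulmxDr mulmxDl mxE. Qed.
Lemma bilMN (R : realType) n (A : 'M[R]_n) v w : bil (- A) v w = - bil A v w.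
Proof. by rewrite /bil mulmxN mulNmx mxE. Qed.
Lemma bilMZ (R : realType) n (t : R) (A : 'M[R]_n) v w : bil (t *: A) v w = t * bil A v w.
Proof. by rewrite /bil -scalemxAr -scalemxAl mxE. Qed.

Lemma psd_fro_le0 (R : realType) n m (U : 'M[R]_(m,n)) (B : 'M[R]_n) :
  (forall v, in_perp U v -> bil B v v <= 0) ->
  forall Y, psd Y -> Y *m U^T = 0 -> fro B Y <= 0.
Proof.
move=> hB.
suff H : forall k (S : {set 'I_n}) Y, (#|S| <= k)%N -> psd Y -> Y *m U^T = 0 ->
   (forall i j, i \notin S -> Y i j = 0) -> fro B Y <= 0.
  move=> Y pY YU; apply: (H n setT) => //; first by rewrite cardsT card_ord.
  by move=> i j; rewrite inE.
elim=> [|k IH] S Y.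
  rewrite leqn0 cards_eq0 => /eqP -> _ _ Y0.
  by rewrite /fro big1 // => p _; rewrite Y0 ?inE ?mulr0.
move=> cS pY YU Ysupp.
have [S0|[i iS]] := set_0Vmem S.
  by rewrite /fro big1 // => p _; rewrite Ysupp ?S0 ?inE ?mulr0.
have cS' : (#|S :\ i| <= k)%N by rewrite (cardsD1 i S) iS in cS.
have sY : Y^T = Y by case: pY.
have Ysym a b : Y a b = Y b a by rewrite -{1}sY mxE.
case: (eqVneq (Y i i) 0) => [d0|dn0].
  apply: (IH (S :\ i)) => // a b; rewrite in_setD1 negb_and negbK => /orP[/eqP->|aS].
    exact: psd_diag0.
  exact: Ysupp.
set r := row i Y.
set Y' := Y - (Y i i)^-1 *: (r^T *m r).
have -> : Y = Y' + (Y i i)^-1 *: (r^T *m r) by rewrite /Y' subrK.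
rewrite froDr froZr -fro_bil.
have dpos : 0 < Y i i by rewrite lt_def dn0 psd_diag_ge0.
have rU : r *m U^T = 0 by rewrite /r -row_mul YU row0.
have rperp : in_perp U r.
  by rewrite /in_perp -(trmxK (U *m r^T)) trmx_mul trmxK rU trmx0.
have rT : r^T = Y *m (delta_mx 0 i)^T by rewrite /r rowE trmx_mul sY.
have h1 : fro B Y' <= 0.
  apply: (IH (S :\ i)) => //.
  - split.
      by rewrite /Y' linearB /= linearZ /= trmx_mul trmxK sY.
    move=> v; rewrite -/(bil _ v v) /Y' bilMD bilMN bilMZ bil_rank1.
    have e1 : (v *m r^T) 0 0 = bil Y v (delta_mx 0 i) by rewrite rT mulmxA.
    have e2 : (r *m v^T) 0 0 = bil Y v (delta_mx 0 i).
      by rewrite -[in LHS](trmxK (r *m v^T)) mxE trmx_mul trmxK e1.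
    rewrite e1 e2; have := psd_cs v pY dn0.
    set b := bil Y v _; set q := bil Y v v; set d := Y i i => h.
    have -> : d^-1 * (b * b) = b ^+ 2 / d by rewrite mulrC expr2.
    by rewrite subr_ge0.
  - by rewrite /Y' mulmxBl YU -scalemxAl -mulmxA rU mulmx0 scaler0 subr0.
  - move=> a b; rewrite in_setD1 negb_and negbK => /orP[/eqP->|aS];
      rewrite /Y' !mxE big_ord1 !mxE.
      by field.
    by rewrite (Ysupp a b aS) (Ysym i a) (Ysupp a i aS) !mul0r mulr0 subr0.
have h2 : (Y i i)^-1 * bil B r r <= 0.
  by apply: mulr_ge0_le0; [rewrite invr_ge0 ltW | exact: hB].
by rewrite -(addr0 0) lerD.
Qed.


Lemma easy_dir (R : realType) n m (P : {set {set 'I_n}}) (U : 'M[R]_(m,n)) (Y B : 'M[R]_n) :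
  in_EP P Y -> Y *m U^T = 0 -> block_diag P B ->
  (forall v, in_perp U v -> bil B v v <= 0) -> 0 < \tr B -> False.
Proof.
move=> [pY hY] YU bB hB trB.
have : fro B Y = \tr B.
  rewrite -fro1; apply: eq_bigr => p _.
  case: (boolP [exists I in P, (p.1 \in I) && (p.2 \in I)]).
    move=> /existsP[I /andP[IP /andP[i1 i2]]].
    by rewrite (hY I IP _ _ i1 i2) mxE.
  by move=> /bB ->; rewrite !mul0r.
have := psd_fro_le0 hB pY YU; lra.
Qed.

Definition blk n (P : {set {set 'I_n}}) i j := [exists I in P, (i \in I) && (j \in I)].
Definition bmask (R : realType) n (P : {set {set 'I_n}}) (Y : 'M[R]_n) : 'M[R]_n :=
  \matrix_(i, j) if blk P i j then Y i j else 0.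
Definition fobj (R : realType) n (P : {set {set 'I_n}}) (Y : 'M[R]_n) : R :=
  fro (1%:M - bmask P Y) (1%:M - bmask P Y).

Lemma blk_refl n (P : {set {set 'I_n}}) i : partition P [set: 'I_n] -> blk P i i.
Proof.
move=> /and3P[/eqP cov _ _].
have : i \in cover P by rewrite cov inE.
by move=> /bigcupP[I IP iI]; apply/existsP; exists I; rewrite IP iI.
Qed.

Lemma blk_sym n (P : {set {set 'I_n}}) i j : blk P i j = blk P j i.
Proof.
by apply/existsP/existsP => -[I /andP[IP /andP[a b]]]; exists I; rewrite IP a b.
Qed.

Lemma bmask_lin (R : realType) n (P : {set {set 'I_n}}) (Y Z : 'M[R]_n) (t : R) :
  bmask P (Y + t *: Z) = bmask P Y + t *: bmask P Z.
Proof. by apply/matrixP => i j; rewrite !mxE; case: blk; rewrite ?mulr0 ?addr0. Qed.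

Lemma bmask0 (R : realType) n (P : {set {set 'I_n}}) : bmask P (0 : 'M[R]_n) = 0.
Proof. by apply/matrixP => i j; rewrite !mxE; case: blk. Qed.

Lemma fro_bmask (R : realType) n (P : {set {set 'I_n}}) (B Y : 'M[R]_n) :
  block_diag P B -> fro B (bmask P Y) = fro B Y.
Proof.
move=> bB; apply: eq_bigr => p _; rewrite mxE /blk.
by case: (boolP [exists I in P, _]) => // /bB ->; rewrite !mul0r.
Qed.

Lemma fro_expand (R : realType) n (B D : 'M[R]_n) (s : R) :
  fro (B + s *: D) (B + s *: D) = fro B B + 2 * s * fro B D + s ^+ 2 * fro D D.
Proof. by rewrite froDl !froDr !froZl !froZr (froC D B); ring. Qed.

Lemma fobj0 (R : realType) n (P : {set {set 'I_n}}) : fobj P (0 : 'M[R]_n) = n%:R.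
Proof. by rewrite /fobj bmask0 subr0 fro1 mxtrace1. Qed.

Lemma fobj_ge (R : realType) n (P : {set {set 'I_n}}) (Y : 'M[R]_n) :
  partition P [set: 'I_n] -> \tr Y - 2 * n%:R <= fobj P Y.
Proof.
move=> pP.
have -> : \tr Y - 2 * n%:R = \sum_(k : 'I_n * 'I_n) (if k.1 == k.2 then Y k.1 k.1 - 2 else 0).
  rewrite -(pair_big xpredT xpredT (fun i j => if i == j then Y i i - 2 else 0)) /=.
  have e : 2 * n%:R = \sum_(i < n) (2:R) by rewrite sumr_const card_ord mulr_natr.
  rewrite /mxtrace e -sumrB.
  apply: eq_bigr => i _; rewrite (bigD1 i) //= eqxx big1 ?addr0 //.
  by move=> j /negbTE; rewrite eq_sym => ->.
apply: ler_sum => k _; case: eqP => [e|_]; last by rewrite -expr2 sqr_ge0.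
rewrite !mxE e eqxx blk_refl //.
set y := Y k.2 k.2.
have -> : true%:R = 1 :> R by [].
have -> : (1 - y) * (1 - y) = (y - 3 / 2) ^+ 2 + 3 / 4 + (y - 2) by field.
have : 0 <= (y - 3 / 2) ^+ 2 by rewrite sqr_ge0.
lra.
Qed.

Lemma small_t (R : realType) (a c : R) :
  (forall t, 0 < t <= 1 -> 0 <= - (2 * t * a) + t ^+ 2 * c) -> a <= 0.
Proof.
move=> H; rewrite leNgt; apply/negP => a0.
have := H 1; rewrite ltr01 lexx /= => /(_ isT); rewrite expr1n mul1r mulr1 => h1.
have c0 : 0 < c by lra.
have : 0 < a / (2 * c) <= 1.
  rewrite divr_gt0 ?mulr_gt0 //=; rewrite ler_pdivrMr ?mulr_gt0 //; lra.
move=> /H; set t := a / (2 * c).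
have -> : - (2 * t * a) + t ^+ 2 * c = - (3 * a ^+ 2 / (4 * c)).
  rewrite /t; field; lra.
rewrite oppr_ge0 leNgt => /negP; apply; apply: divr_gt0; last lra.
by rewrite mulr_gt0 // exprn_gt0.
Qed.


Lemma psdD (R : realType) n (A C : 'M[R]_n) : psd A -> psd C -> psd (A + C).
Proof.
move=> [sA qA] [sC qC]; split; first by rewrite linearD /= sA sC.
by move=> v; rewrite -/(bil _ v v) bilMD addr_ge0 //; [exact: qA | exact: qC].
Qed.
Lemma psdZ (R : realType) n (s : R) (A : 'M[R]_n) : 0 <= s -> psd A -> psd (s *: A).
Proof.
move=> s0 [sA qA]; split; first by rewrite linearZ /= sA.
by move=> v; rewrite -/(bil _ v v) bilMZ mulr_ge0 //; exact: qA.
Qed.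
Lemma psd0 (R : realType) n : psd (0 : 'M[R]_n).
Proof. by split; [rewrite trmx0 | move=> v; rewrite mulmx0 mul0mx mxE]. Qed.

Lemma hard_dir (R : realType) n m (P : {set {set 'I_n}}) (U : 'M[R]_(m, n)) :
  partition P [set: 'I_n] -> ~ realizable P U ->
  (exists Ys : 'M[R]_n, [/\ psd Ys, Ys *m U^T = 0 &
     forall Z, psd Z -> Z *m U^T = 0 -> \tr Z <= 3 * n%:R -> fobj P Ys <= fobj P Z]) ->
  exists B : 'M[R]_n,
     [/\ B^T = B, block_diag P B, 0 < \tr B &
         forall v : 'rV[R]_n, in_perp U v -> (v *m B *m v^T) ord0 ord0 <= 0].
Proof.
move=> pP nR [Ys [pYs YsU hmin]].
have gmin Z : psd Z -> Z *m U^T = 0 -> fobj P Ys <= fobj P Z.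
  move=> pZ ZU; case: (lerP (\tr Z) (3 * n%:R)) => [|trZ]; first exact: hmin.
  have h0 : fobj P Ys <= n%:R.
    rewrite -(fobj0 R P); apply: hmin; [exact: psd0 | by rewrite mul0mx |].
    by rewrite mxtrace0 mulr_ge0.
  have := fobj_ge Z pP; have : 0 <= n%:R :> R by [].
  lra.
have sYs a b : Ys a b = Ys b a by case: pYs => sY _; rewrite -{1}sY mxE.
set B := 1%:M - bmask P Ys.
have sB : B^T = B.
  by apply/matrixP => i j; rewrite !mxE blk_sym sYs eq_sym.
have bB : block_diag P B.
  move=> i j nb; rewrite !mxE /blk (negbTE nb).
  case: (eqVneq i j) nb => [->|_] nb; last by rewrite subr0.
  by move/negP: nb; case; exact: blk_refl.
have key Z : psd Z -> Z *m U^T = 0 -> fro B Z <= 0.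
  move=> pZ ZU; rewrite -(fro_bmask Z bB).
  apply: (@small_t _ _ (fro (bmask P Z) (bmask P Z))) => t /andP[t0 t1].
  have := gmin (Ys + t *: Z) (psdD pYs (psdZ (ltW t0) pZ)).
  rewrite mulmxDl -scalemxAl ZU YsU scaler0 addr0 => /(_ erefl).
  rewrite /fobj bmask_lin.
  rewrite (_ : 1%:M - (bmask P Ys + t *: bmask P Z) = B + (- t) *: bmask P Z); last first.
    by rewrite /B scaleNr opprD addrA.
  rewrite fro_expand sqrrN -/B.
  set a := fro B (bmask P Z); set c := fro (bmask P Z) _.
  have -> : 2 * - t * a = - (2 * t * a) by ring.
  lra.
have pos : 0 <= fro B (bmask P Ys).
  rewrite -oppr_le0; apply: (@small_t _ _ (fro (bmask P Ys) (bmask P Ys))) => t /andP[t0 t1].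
  have := gmin ((1 - t) *: Ys) (psdZ _ pYs).
  rewrite -scalemxAl YsU scaler0 subr_ge0 => /(_ t1 erefl).
  rewrite /fobj (_ : (1 - t) *: Ys = Ys + (- t) *: Ys); last first.
    by rewrite scalerBl scale1r scaleNr.
  rewrite bmask_lin (_ : 1%:M - (bmask P Ys + - t *: bmask P Ys) = B + t *: bmask P Ys); last first.
    by rewrite /B scaleNr opprD opprK addrA.
  rewrite fro_expand -/B.
  set a := fro B (bmask P Ys); set c := fro (bmask P Ys) _.
  have -> : 2 * t * - a = - (2 * t * a) by ring.
  lra.
have BB : 0 < fro B B.
  rewrite lt_def fro_ge0 andbT; apply/eqP => H0.
  apply: nR; exists Ys; split => //; split => // I IP i j iI jI.
  have hb : blk P i j by apply/existsP; exists I; rewrite IP iI jI.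
  have hz : forall k : 'I_n * 'I_n, true -> B k.1 k.2 * B k.1 k.2 = 0.
    by apply: psumr_eq0P => // k _; rewrite -expr2 sqr_ge0.
  have := hz (i, j) isT.
  move=> /eqP; rewrite mulf_eq0 orbb /B !mxE hb subr_eq0 => /eqP <-.
  by [].
exists B; split => //.
  have e : fro B 1%:M = fro B B + fro B (bmask P Ys) by rewrite -froDr /B subrK.
  rewrite -fro1 e; lra.
move=> v vp; rewrite -/(bil B v v) fro_bil; apply: key; first exact: psd_rank1.
have vU : v *m U^T = 0 by rewrite -(trmxK (v *m U^T)) trmx_mul trmxK vp trmx0.
by rewrite -mulmxA vU mulmx0.
Qed.


Lemma entry_bound (R : realType) n (Y : 'M[R]_n) i j : psd Y -> `|Y i j| <= \tr Y.
Proof.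
move=> pY; have sY : Y^T = Y by case: pY.
have Yji : Y j i = Y i j by rewrite -{1}sY mxE.
have h1 := psd_quad (delta_mx 0 i + 1 *: delta_mx 0 j) pY.
have h2 := psd_quad (delta_mx 0 i + (-1) *: delta_mx 0 j) pY.
rewrite quad_expand // !bil_delta in h1; rewrite quad_expand // !bil_delta in h2.
have tri k : Y k k <= \tr Y.
  rewrite /mxtrace (bigD1 k) //= lerDl; apply: sumr_ge0 => l _; exact: psd_diag_ge0.
have := tri i; have := tri j; have := psd_diag_ge0 i pY; have := psd_diag_ge0 j pY.
have e : (-1:R)^+2 = 1 by rewrite sqrrN expr1n.
rewrite expr1n in h1; rewrite e in h2.
move: h1 h2; rewrite ler_norml; set a := Y i j; set d1 := Y i i; set d2 := Y j j; set T := \tr Y.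
move=> h1 h2 *; apply/andP; split; lra.
Qed.

Module An.
Import all_classical all_reals all_analysis.
Import numFieldNormedType.Exports.
Local Open Scope classical_set_scope.
Local Open Scope ring_scope.


Lemma cont_coord (R : realType) n (i j : 'I_n) :
  continuous (fun x : 'rV[R]_(n * n) => vec_mx x i j).
Proof.
have -> : (fun x : 'rV[R]_(n * n) => vec_mx x i j) = (fun x => x ord0 (mxvec_index i j)).
  by apply: funext => x; rewrite mxE.
exact: coord_continuous.
Qed.

Lemma cont_sum (R : realType) N (I : Type) (r : seq I) (F : I -> 'rV[R]_N -> R) :
  (forall i, continuous (F i)) -> continuous (fun x => \sum_(i <- r) F i x).
Proof.
move=> hF; elim: r => [|a r IH].
  have -> : (fun x : 'rV[R]_N => \sum_(i <- [::]) F i x) = (fun=> 0).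
    by apply: funext => x; rewrite big_nil.
  exact: cst_continuous.
have -> : (fun x => \sum_(i <- a :: r) F i x) = (F a + (fun x => \sum_(i <- r) F i x)).
  by apply: funext => x; rewrite big_cons.
by move=> x; apply: continuousD; [exact: hF | exact: IH].
Qed.

Lemma cont_mul (R : realType) N (f g : 'rV[R]_N -> R) :
  continuous f -> continuous g -> continuous (fun x => f x * g x).
Proof. by move=> hf hg x; apply: continuousM; [exact: hf | exact: hg]. Qed.

Lemma cont_sub (R : realType) N (f g : 'rV[R]_N -> R) :
  continuous f -> continuous g -> continuous (fun x => f x - g x).
Proof. by move=> hf hg x; apply: continuousB; [exact: hf | exact: hg]. Qed.

Lemma cont_cst (R : realType) N (c : R) : continuous (fun _ : 'rV[R]_N => c).
Proof. exact: cst_continuous. Qed.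


Lemma closed_all_eq0 (R : realType) N I (g : I -> 'rV[R]_N -> R) :
  (forall i, continuous (g i)) -> closed [set x | forall i, g i x = 0].
Proof.
move=> hg.
have -> : [set x | forall i, g i x = 0] = \bigcap_(i in setT) (g i @^-1` [set x | x = 0]).
  by apply/seteqP; split => x /= H i; [move=> _; exact: H | exact: H].
apply: closed_bigI => i _; move/continuous_closedP: (hg i); apply; exact: closed_eq.
Qed.

Lemma closed_all_ge0 (R : realType) N I (g : I -> 'rV[R]_N -> R) :
  (forall i, continuous (g i)) -> closed [set x | forall i, 0 <= g i x].
Proof.
move=> hg.
have -> : [set x | forall i, 0 <= g i x] = \bigcap_(i in setT) (g i @^-1` [set x | 0 <= x]).
  by apply/seteqP; split => x /= H i; [move=> _; exact: H | exact: H].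
apply: closed_bigI => i _; move/continuous_closedP: (hg i); apply; exact: closed_ge.
Qed.


Lemma min_exists (R : realType) n m (P : {set {set 'I_n}}) (U : 'M[R]_(m, n)) :
  exists Ys : 'M[R]_n, [/\ psd Ys, Ys *m U^T = 0 &
     forall Z, psd Z -> Z *m U^T = 0 -> \tr Z <= 3 * n%:R -> fobj P Ys <= fobj P Z].
Proof.
pose A1 := [set x : 'rV[R]_(n*n) | forall p : 'I_n * 'I_n, vec_mx x p.2 p.1 - vec_mx x p.1 p.2 = 0].
pose A2 := [set x : 'rV[R]_(n*n) | forall v : 'rV[R]_n, 0 <= bil (vec_mx x) v v].
pose A3 := [set x : 'rV[R]_(n*n) | forall q : 'I_n * 'I_m, (vec_mx x *m U^T) q.1 q.2 = 0].
pose A4 := [set x : 'rV[R]_(n*n) | forall u : unit, 0 <= 3 * n%:R - \tr (vec_mx x)].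
pose S := A1 `&` (A2 `&` (A3 `&` A4)).
have inS Z : psd Z -> Z *m U^T = 0 -> \tr Z <= 3 * n%:R -> S (mxvec Z).
  move=> [sZ qZ] ZU trZ; rewrite /S /A1 /A2 /A3 /A4 /= mxvecK; split; [|split; [|split]].
  - by move=> p; rewrite -{1}sZ mxE subrr.
  - exact: qZ.
  - by move=> q; rewrite ZU mxE.
  - by move=> _; rewrite subr_ge0.
have Spsd x : S x -> [/\ psd (vec_mx x), vec_mx x *m U^T = 0 & \tr (vec_mx x) <= 3 * n%:R].
  move=> [h1 [h2 [h3 h4]]]; split; [split| |].
  - apply/matrixP => i j; rewrite mxE; apply/eqP; rewrite -subr_eq0; apply/eqP.
    exact: (h1 (i, j)).
  - exact: h2.
  - by apply/matrixP => i k; rewrite (h3 (i, k)) mxE.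
  - by have := h4 tt; rewrite subr_ge0.
have Scl : closed S.
  apply: closedI; [|apply: closedI; [|apply: closedI]].
  - apply: closed_all_eq0 => p; apply: cont_sub; exact: cont_coord.
  - apply: (@closed_all_ge0 _ _ _ (fun v x => bil (vec_mx x) v v)) => v.
    have -> : (fun x : 'rV[R]_(n*n) => bil (vec_mx x) v v) =
        (fun x => \sum_j (\sum_i v 0 i * vec_mx x i j) * v^T j 0).
      by apply: funext => x; rewrite /bil !mxE; apply: eq_bigr => j _; rewrite !mxE.
    apply: cont_sum => j; apply: cont_mul; last exact: cont_cst.
    apply: cont_sum => i; apply: cont_mul; [exact: cont_cst | exact: cont_coord].
  - apply: (@closed_all_eq0 _ _ _ (fun q x => (vec_mx x *m U^T) q.1 q.2)) => q.
    have -> : (fun x : 'rV[R]_(n*n) => (vec_mx x *m U^T) q.1 q.2) =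
        (fun x => \sum_j vec_mx x q.1 j * U^T j q.2).
      by apply: funext => x; rewrite !mxE.
    apply: cont_sum => j; apply: cont_mul; [exact: cont_coord | exact: cont_cst].
  - apply: (@closed_all_ge0 _ _ _ (fun u x => 3 * n%:R - \tr (vec_mx x))) => u.
    apply: cont_sub; first exact: cont_cst.
    apply: cont_sum => i; exact: cont_coord.
have Sbox : S `<=` [set v : 'rV[R]_(n*n) |
    forall k, `[- (3 * n%:R), 3 * n%:R]%classic (v ord0 k)].
  move=> x /Spsd [px _ trx] k /=.
  case/mxvec_indexP: k => i j.
  have -> : x ord0 (mxvec_index i j) = vec_mx x i j by rewrite mxE.
  rewrite in_itv /= -ler_norml; exact: le_trans (entry_bound i j px) trx.
have Scpt : compact S.
  apply: (subclosed_compact Scl _ Sbox).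
  have := (@rV_compact R (n*n) (fun=> `[- (3 * n%:R), 3 * n%:R]%classic) (fun=> @segment_compact R (- (3 * n%:R)) (3 * n%:R))).
  by [].
have S0 : S !=set0.
  exists (mxvec 0); apply: inS; [exact: psd0 | by rewrite mul0mx |].
  by rewrite mxtrace0 mulr_ge0.
pose f := fun x : 'rV[R]_(n*n) => fobj P (vec_mx x).
have fcont : continuous f.
  have -> : f = (fun x => \sum_(k : 'I_n * 'I_n)
     ((k.1 == k.2)%:R - (if blk P k.1 k.2 then vec_mx x k.1 k.2 else 0)) *
     ((k.1 == k.2)%:R - (if blk P k.1 k.2 then vec_mx x k.1 k.2 else 0))).
    by apply: funext => x; rewrite /f /fobj /fro; apply: eq_bigr => k _; rewrite !mxE.
  apply: cont_sum => k; apply: cont_mul; apply: cont_sub; try exact: cont_cst;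
    case: blk; [exact: cont_coord | exact: cont_cst | exact: cont_coord | exact: cont_cst].
have [c cS cmin] := compact_EVT_min S0 Scpt (continuous_subspaceT fcont).
have [pc cU _] := Spsd c (set_mem cS).
exists (vec_mx c); split => // Z pZ ZU trZ.
by have := cmin (mxvec Z) (mem_set (inS Z pZ ZU trZ)); rewrite /f mxvecK.
Qed.

End An.


Theorem lemma5p5 (R : realType) (n m : nat) (P : {set {set 'I_n}})
    (U : 'M[R]_(m, n)) :
  partition P [set: 'I_n] ->
  (~ realizable P U <->
   exists B : 'M[R]_n,
     [/\ B^T = B, block_diag P B, 0 < \tr B &
         forall v : 'rV[R]_n, in_perp U v -> (v *m B *m v^T) ord0 ord0 <= 0]).
Proof.
move=> pP; split.
  by move=> nR; apply: hard_dir => //; exact: An.min_exists.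
move=> [B [sB bB trB hB]] [Y [pY YU]]; exact: (easy_dir pY YU bB hB trB).
Qed.
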